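(* Let $G$ be a non-compact, compactly generated tdlc group and $\Gamma$ a Cayley–Abels graph for $G$ of valency $d$. Let $K\le G$ be the kernel of the action of $G$ on $\Gamma$ and let $L\le\operatorname{Sym}(d)$ be the local action of $G$ on $\Gamma$. If a prime $p$ lies in the local prime content of $G/K$, then $p$ divides the order of the stabilizer in $L$ of some point of $\{1,\dots,d\}$. In particular, the local prime content of $G/K$ is finite.
   Context: A Cayley–Abels graph for a tdlc group $G$ is a locally finite, connected simple graph together with a vertex-transitive action of $G$ by graph automorphisms with compact open vertex stabilizers; its valency $d$ is the number of neighbours of each vertex. The kernel $K$ is the set of elements fixing all vertices. The local action of $G$ is the permutation group $G_\alpha/(G_\alpha\cap G_{\mathbf{N}(\alpha)})\le\operatorname{Sym}(\mathbf{N}(\alpha))$ induced by the vertex stabilizer $G_\alpha$ on the neighbour set $\mathbf{N}(\alpha)$, identified with a subgroup of $\operatorname{Sym}(d)$ via a bijection $\mathbf{N}(\alpha)\to\{1,\dots,d\}$ (well-defined up to conjugacy and independent of $\alpha$). The local prime content of a tdlc group $H$ is the set of primes $p$ such that every compact open subgroup $U\le H$ contains a compact open subgroup $V\le U$ with $p\mid[U:V]$. *)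

(* Defs.v *)
From HB Require Import structures.
From mathcomp Require Import all_boot all_order all_algebra all_fingroup.
From mathcomp Require Import all_classical all_reals all_analysis.
From Stdlib Require Import Relations.

Set Implicit Arguments.
Unset Strict Implicit.
Unset Printing Implicit Defensive.

Local Open Scope classical_set_scope.

Definition group_axioms (T : Type) (mul : T -> T -> T) (inv : T -> T) (one : T) :=
  [/\ forall x y z, mul x (mul y z) = mul (mul x y) z,
      forall x, mul one x = x &
      forall x, mul (inv x) x = one].

Definition is_subgroup (T : Type) (mul : T -> T -> T) (inv : T -> T) (one : T)
  (H : set T) :=
  [/\ H one, forall x y, H x -> H y -> H (mul x y) & forall x, H x -> H (inv x)].

Definition gen_subgroup (T : Type) (mul : T -> T -> T) (inv : T -> T) (one : T)
  (C : set T) : set T :=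
  \bigcap_(H in [set H | is_subgroup mul inv one H /\ C `<=` H]) H.

Definition tdlc_group (T : topologicalType) (mul : T -> T -> T) (inv : T -> T)
  (one : T) :=
  [/\ group_axioms mul inv one,
      continuous (fun xy : T * T => mul xy.1 xy.2) /\ continuous inv,
      hausdorff_space T,
      locally_compact [set: T] &
      totally_disconnected [set: T]].

Definition compactly_generated (T : topologicalType) (mul : T -> T -> T)
  (inv : T -> T) (one : T) :=
  exists C : set T, compact C /\ gen_subgroup mul inv one C = [set: T].

Definition compact_open_subgroup (T : topologicalType) (mul : T -> T -> T)
  (inv : T -> T) (one : T) (U : set T) :=
  [/\ is_subgroup mul inv one U, compact U & open U].

(* p divides the index [U : V]: U is the disjoint union of exactly n left
   cosets f i V (i < n) of V, with f i in U, and p %| n. *)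
Definition dvd_index (T : Type) (mul : T -> T -> T) (U V : set T) (p : nat) :=
  exists (n : nat) (f : 'I_n -> T),
    [/\ forall i, U (f i),
        forall u, U u -> exists! i, exists v, V v /\ u = mul (f i) v &
        (p %| n)%N].

Definition local_prime_content (T : topologicalType) (mul : T -> T -> T)
  (inv : T -> T) (one : T) : set nat :=
  [set p | prime p /\
     forall U, compact_open_subgroup mul inv one U ->
       exists V, [/\ compact_open_subgroup mul inv one V, V `<=` U &
                     dvd_index mul U V p]].

Definition lcoset (T : Type) (mul : T -> T -> T) (N : set T) (g : T) : set T :=
  [set mul g k | k in N].

(* elements of G/N are the left cosets gN *)
Definition cosets (T : Type) (mul : T -> T -> T) (N : set T) : Type :=
  {A : set T | exists g, A = lcoset mul N g}.

Section Quotient.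
Context (T : topologicalType) (mul : T -> T -> T) (N : set T).

Local Notation Q := (cosets mul N).

HB.instance Definition _ := gen_eqMixin Q.
HB.instance Definition _ := gen_choiceMixin Q.

Definition quot_pi (g : T) : Q := exist _ (lcoset mul N g) (ex_intro _ g erefl).

Definition quot_repr (A : Q) : T := projT1 (cid (proj2_sig A)).

Definition quot_open (W : set Q) := open (quot_pi @^-1` W).

Program Definition quot_topologicalType_mixin :=
  @isOpenTopological.Build Q quot_open _ _ _.
Next Obligation. by rewrite /quot_open preimage_setT; exact: openT. Qed.
Next Obligation. by move=> ? ? ? ?; exact: openI. Qed.
Next Obligation. by move=> I f ofi; apply: bigcup_open => i _; exact: ofi. Qed.
HB.instance Definition _ := quot_topologicalType_mixin.

Definition quot_mul (A B : Q) : Q := quot_pi (mul (quot_repr A) (quot_repr B)).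
Definition quot_inv (inv : T -> T) (A : Q) : Q := quot_pi (inv (quot_repr A)).
Definition quot_one (one : T) : Q := quot_pi one.

End Quotient.

Definition action_kernel (T V : Type) (act : T -> V -> V) : set T :=
  [set g | forall v, act g v = v].

Definition vertex_stab (T V : Type) (act : T -> V -> V) (v : V) : set T :=
  [set g | act g v = v].

Definition cayley_abels_graph (T : topologicalType) (mul : T -> T -> T)
  (one : T) (V : Type) (adj : V -> V -> Prop) (act : T -> V -> V) (d : nat) :=
  [/\
      (forall u v, adj u v -> adj v u) /\ (forall v, ~ adj v v),
      inhabited V /\ (forall u v, clos_refl_trans V adj u v),
      (forall v, exists b : 'I_d -> V, injective b /\ range b = adj v),
      [/\ forall v, act one v = v,
          forall g h v, act (mul g h) v = act g (act h v) &
          forall g u v, adj u v <-> adj (act g u) (act g v)] &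
      (forall u v, exists g, act g u = v) /\
      (forall v, compact (vertex_stab act v) /\ open (vertex_stab act v))].

(* The local action at alpha, identified with a subgroup of Sym(d) via the
   bijection b : 'I_d -> N(alpha): the permutations s such that some g in
   G_alpha acts on N(alpha) as b \o s \o b^-1. *)
Definition local_action (T V : Type) (act : T -> V -> V) (alpha : V) (d : nat)
  (b : 'I_d -> V) : {set 'S_d} :=
  [set s : 'S_d | `[< exists g, act g alpha = alpha /\
                                forall i, act g (b i) = b (s i) >]].

Definition perm_point_stab (d : nat) (L : {set 'S_d}) (i : 'I_d) : {set 'S_d} :=
  [set s in L | s i == i].

(* Main.v *)
Require Import Defs.
From HB Require Import structures.
From mathcomp Require Import all_boot all_order all_algebra all_fingroup.
From mathcomp Require Import all_classical all_reals all_analysis.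
From mathcomp Require pgroup cyclic finmap.
From Stdlib Require Import Relations.

Set Implicit Arguments.
Unset Strict Implicit.
Unset Printing Implicit Defensive.
Local Open Scope classical_set_scope.


Definition Veq (V : Type) : Type := V.
HB.instance Definition _ (V : Type) := gen_eqMixin (Veq V).
HB.instance Definition _ (V : Type) := gen_choiceMixin (Veq V).

Section Grp.
Context (G : Type) (mul : G -> G -> G) (inv : G -> G) (one : G).
Hypothesis GA : group_axioms mul inv one.

Lemma gmulA x y z : mul x (mul y z) = mul (mul x y) z. Proof. by case: GA. Qed.
Lemma gmul1 x : mul one x = x. Proof. by case: GA. Qed.
Lemma gmulV x : mul (inv x) x = one. Proof. by case: GA. Qed.
Lemma gmulIl a x y : mul a x = mul a y -> x = y.
Proof. by move=> h; rewrite -(gmul1 x) -(gmul1 y) -(gmulV a) -!gmulA h. Qed.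
Lemma gmulVr x : mul x (inv x) = one.
Proof.
have e : mul (mul x (inv x)) (mul x (inv x)) = mul x (inv x).
  by rewrite -gmulA [mul (inv x) _]gmulA gmulV gmul1.
have := congr1 (mul (inv (mul x (inv x)))) e.
by rewrite gmulA gmulV gmul1.
Qed.
Lemma gmul1r x : mul x one = x.
Proof. by rewrite -(gmulV x) gmulA gmulVr gmul1. Qed.
Lemma ginvK x : inv (inv x) = x.
Proof. by apply: (@gmulIl (inv x)); rewrite gmulV gmulVr. Qed.
Lemma ginvM x y : inv (mul x y) = mul (inv y) (inv x).
Proof.
apply: (@gmulIl (mul x y)); rewrite gmulVr -gmulA [mul y _]gmulA gmulVr gmul1 gmulVr //.
Qed.
Lemma gmulKl x y : mul (inv x) (mul x y) = y.
Proof. by rewrite gmulA gmulV gmul1. Qed.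
Lemma gmulKVl x y : mul x (mul (inv x) y) = y.
Proof. by rewrite gmulA gmulVr gmul1. Qed.
End Grp.


Section Quot.
Context (G : topologicalType) (mul : G -> G -> G) (inv : G -> G) (one : G).
Hypothesis GA : group_axioms mul inv one.
Context (V : Type) (act : G -> V -> V).
Hypothesis act1 : forall v, act one v = v.
Hypothesis actM : forall g h v, act (mul g h) v = act g (act h v).
Let K := action_kernel act.
Let mulA := gmulA GA. Let mul1 := gmul1 GA. Let mulV := gmulV GA.
Let mulVr := gmulVr GA. Let mul1r := gmul1r GA. Let invK := ginvK GA.
Let invM := ginvM GA. Let mulKl := gmulKl GA. Let mulKVl := gmulKVl GA.
Local Notation pi := (quot_pi mul K).

Lemma qactK g v : act (inv g) (act g v) = v.
Proof. by rewrite -actM mulV. Qed.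
Lemma qactKV g v : act g (act (inv g) v) = v.
Proof. by rewrite -actM mulVr. Qed.
Lemma qK1 : K one. Proof. by move=> v; rewrite act1. Qed.
Lemma qKM a b : K a -> K b -> K (mul a b).
Proof. by move=> ha hb v; rewrite actM hb ha. Qed.
Lemma qKV a : K a -> K (inv a).
Proof. by move=> ha v; rewrite -{1}(ha v) qactK. Qed.
Lemma qKconj g k : K k -> K (mul (inv g) (mul k g)).
Proof. by move=> hk v; rewrite !actM hk qactK. Qed.

Lemma qpiE a b : pi a = pi b <-> exists k, K k /\ b = mul a k.
Proof.
split.
  move=> /(congr1 (@proj1_sig _ _)) /= e.
  have : Defs.lcoset mul K b b by exists one; [exact: qK1| rewrite mul1r].
  by rewrite -e => -[k hk <-]; exists k.
move=> [k [hk ->]]; apply: eq_exist; apply/seteqP; split=> x [y hy <-].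
  exists (mul (inv k) y); first exact: qKM (qKV hk) hy.
  by rewrite mulA -(mulA a) mulVr mul1r.
by exists (mul k y); [exact: qKM | rewrite mulA].
Qed.

Lemma qpi_repr A : pi (quot_repr A) = A.
Proof.
case: A => A hA; apply: eq_exist => /=.
by rewrite /quot_repr /=; case: (cid hA) => /= g ->.
Qed.

Lemma qrepr_pi a : exists k, K k /\ quot_repr (pi a) = mul a k.
Proof. by apply/qpiE; rewrite qpi_repr. Qed.

Lemma qpi_mul a b : quot_mul (pi a) (pi b) = pi (mul a b).
Proof.
rewrite /quot_mul; have [k1 [h1 ->]] := qrepr_pi a; have [k2 [h2 ->]] := qrepr_pi b.
apply/esym/qpiE; exists (mul (mul (inv b) (mul k1 b)) k2); split.
  by apply: qKM => //; exact: qKconj.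
by rewrite !mulA -(mulA a b) mulVr mul1r -!mulA.
Qed.

Lemma qpi_inv a : quot_inv inv (pi a) = pi (inv a).
Proof.
rewrite /quot_inv; have [k [hk ->]] := qrepr_pi a.
apply/esym/qpiE; exists (mul (inv (inv a)) (mul (inv k) (inv a))); split.
  by apply: qKconj; exact: qKV.
by rewrite invK invM mulKl.
Qed.

End Quot.


Fixpoint vball (V : Type) (adj : V -> V -> Prop) (alpha : V) (r : nat) (v : V) : Prop :=
  match r with
  | 0 => v = alpha
  | r.+1 => vball adj alpha r v \/ exists u, vball adj alpha r u /\ adj u v
  end.

Section Ball.
Context (V : Type) (adj : V -> V -> Prop) (alpha : V).
Local Notation vball := (vball adj alpha).

Lemma ball_mono r r' v : (r <= r')%N -> vball r v -> vball r' v.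
Proof.
move=> /subnK <-; elim: (r' - r)%N => // k IH /IH h; rewrite addSn; by left.
Qed.

Lemma ball_enum d (nbr : V -> 'I_d -> V) :
  (forall u, range (nbr u) = adj u) ->
  forall r, exists s : seq (Veq V), forall v, v \in s <-> vball r v.
Proof.
move=> hn; elim=> [|r [s hs]].
  exists [:: (alpha : Veq V)] => v; rewrite inE; split. move=> h. exact: (eqP h). move=> h; exact/eqP.
exists (s ++ flatten [seq [seq (nbr u i : Veq V) | i <- enum 'I_d] | u <- s]) => v.
rewrite mem_cat /=; split.
  case/orP=> [hv|]; first by left; apply/hs.
  move=> H; have [u [i [hu _ e]]] := elimT (@allpairsPdep (Veq V) (fun _ => 'I_d) (Veq V) (fun u i => nbr u i) s (fun _ => enum 'I_d) v) H; have {}hu := proj1 (hs u) hu; rewrite e; right; exists u; split=> //.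
  by rewrite -hn; exists i.
case=> [hv|[u [hu]]]; first by rewrite (proj2 (hs v) hv).
have {}hu := proj2 (hs u) hu.
rewrite -hn => -[i _ <-].
apply/orP; right; apply/(@allpairsPdep (Veq V) (fun _ => 'I_d) (Veq V) (fun u i => nbr u i) s (fun _ => enum 'I_d) _); exists u, i; split=> //.
by rewrite mem_enum.
Qed.

Lemma ball_conn v : clos_refl_trans V adj alpha v -> exists r, vball r v.
Proof.
move=> h; elim: (clos_rt_rtn1 _ _ _ _ h) => [|y z hyz _ [r hr]]; first by exists 0%N.
by exists r.+1; right; exists y.
Qed.

Lemma ball_act (f : V -> V) : f alpha = alpha -> (forall u v, adj u v -> adj (f u) (f v)) ->
  forall r v, vball r v -> vball r (f v).
Proof.
move=> fa fadj; elim=> [v /= ->//|r IH v [/IH h|[u [/IH hu huv]]]]; first by left.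
by right; exists (f u); split=> //; exact: fadj.
Qed.

End Ball.


Section Topo.
Context (G : topologicalType) (mul : G -> G -> G) (inv : G -> G) (one : G).
Hypothesis GA : group_axioms mul inv one.
Hypothesis mulC : continuous (fun xy : G * G => mul xy.1 xy.2).
Let mulA := gmulA GA. Let mul1 := gmul1 GA. Let mulV := gmulV GA.
Let mulVr := gmulVr GA. Let mul1r := gmul1r GA. Let invK := ginvK GA.
Let invM := ginvM GA. Let mulKl := gmulKl GA. Let mulKVl := gmulKVl GA.

Lemma lmul_cont c : continuous (mul c).
Proof.
move=> x; apply: (@continuous2_cvg _ _ _ _ _ _ (fun _ => c) id mul c x).
- exact: (@mulC (c, x)).
- exact: cvg_cst.
- exact: cvg_id.
Qed.

Lemma ltrans_open g (A : set G) : open A -> open [set mul g h | h in A].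
Proof.
move=> oA.
have -> : [set mul g h | h in A] = mul (inv g) @^-1` A.
  apply/seteqP; split=> x /=.
    by case=> h hA <-; rewrite mulKl.
  by move=> hA; exists (mul (inv g) x) => //; rewrite mulKVl.
by move: oA; apply: (proj1 (continuousP _)); exact: lmul_cont.
Qed.

Lemma open_subgroup_closed (H : set G) : is_subgroup mul inv one H -> open H -> closed H.
Proof.
case=> H1 HM HV oH; rewrite -[H]setCK; apply: open_closedC.
have -> : ~` H = \bigcup_(g in ~` H) [set mul g h | h in H].
  apply/seteqP; split=> x.
    by move=> hx; exists x => //; exists one => //; rewrite mul1r.
  case=> g hg [h hh <-] hgh; apply: hg.
  by have := HM _ _ hgh (HV _ hh); rewrite -mulA mulVr mul1r.
by apply: bigcup_open => g _; exact: ltrans_open.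
Qed.

End Topo.


Section CC.
Context (T : topologicalType) (t : T).
Definition Tp : Type := T.
HB.instance Definition _ := Topological.on Tp.
HB.instance Definition _ := isPointed.Build Tp t.
Lemma compact_cover_np (A : set T) : compact A -> cover_compact A.
Proof. by have := @compact_cover Tp; move=> e; rewrite [X in X A -> _]e. Qed.
End CC.


Section Main.
Context (G : topologicalType) (mul : G -> G -> G) (inv : G -> G) (one : G).
Hypothesis GA : group_axioms mul inv one.
Hypothesis mulC : continuous (fun xy : G * G => mul xy.1 xy.2).
Context (V : Type) (adj : V -> V -> Prop) (act : G -> V -> V) (d : nat).
Hypothesis adj_sym : forall u v, adj u v -> adj v u.
Hypothesis act1 : forall v, act one v = v.
Hypothesis actM : forall g h v, act (mul g h) v = act g (act h v).
Hypothesis act_adj : forall g u v, adj u v <-> adj (act g u) (act g v).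
Hypothesis trans : forall u v, exists g, act g u = v.
Hypothesis stabCO : forall v, compact (vertex_stab act v) /\ open (vertex_stab act v).
Hypothesis conn : forall u v, clos_refl_trans V adj u v.
Context (nbr : V -> 'I_d -> V).
Hypothesis nbrR : forall u, range (nbr u) = adj u.
Context (alpha : V).

Let mulA := gmulA GA. Let mul1 := gmul1 GA. Let mulV := gmulV GA.
Let mulVr := gmulVr GA. Let mul1r := gmul1r GA. Let invK := ginvK GA.
Let invM := ginvM GA. Let mulKl := gmulKl GA. Let mulKVl := gmulKVl GA.
Let actK := qactK GA act1 actM.
Let actKV := qactKV GA act1 actM.
Let K := action_kernel act.
Local Notation ball := (vball adj alpha).

Definition Fix (S : set V) : set G := [set g | forall v, S v -> act g v = v].
Let W := Fix (ball 1).

Lemma Fix_sub S : is_subgroup mul inv one (Fix S).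
Proof.
split.
- by move=> v _; rewrite act1.
- by move=> x y hx hy v hv; rewrite actM hy ?hx.
- by move=> x hx v hv; rewrite -{1}(hx v hv) actK.
Qed.

Lemma Fix1 S : Fix S one. Proof. by case: (Fix_sub S). Qed.
Lemma FixM S x y : Fix S x -> Fix S y -> Fix S (mul x y). Proof. by case: (Fix_sub S) => _ h _; exact: h. Qed.
Lemma FixV S x : Fix S x -> Fix S (inv x). Proof. by case: (Fix_sub S) => _ _ h; exact: h. Qed.

Lemma K_Fix S : K `<=` Fix S. Proof. by move=> k hk v _; exact: hk. Qed.

Lemma Fix_anti (S T : set V) : S `<=` T -> Fix T `<=` Fix S.
Proof. by move=> ST g hg v /ST; exact: hg. Qed.

Lemma Fix_ball_open r : open (Fix (ball r)).
Proof.
have [s hs] := ball_enum alpha nbrR r.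
have -> : Fix (ball r) = [set g | forall v : Veq V, v \in s -> act g v = v].
  by apply/seteqP; split=> g hg v hv; apply: hg; apply/hs.
elim: s {hs} => [|x s IH].
  by rewrite (_ : [set _ | _] = setT); [exact: openT | apply/seteqP; split].
have -> : [set g | forall v : Veq V, v \in x :: s -> act g v = v] =
    vertex_stab act x `&` [set g | forall v : Veq V, v \in s -> act g v = v].
  apply/seteqP; split=> g.
    by move=> h; split; [apply: h; rewrite inE eqxx | move=> v hv; apply: h; rewrite inE hv orbT].
  by case=> h1 h2 v; rewrite inE => /orP [/eqP ->|]; [exact: h1 | exact: h2].
by apply: openI => //; exact: (stabCO x).2.
Qed.

Lemma W_compact : compact W.
Proof.
have -> : W = vertex_stab act alpha `&` W.
  by apply/seteqP; split=> [g hg|g []//]; split=> //; apply: hg; left.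
apply: compact_closedI; first exact: (stabCO alpha).1.
apply: (open_subgroup_closed GA mulC); [exact: Fix_sub | exact: Fix_ball_open].
Qed.

Lemma key_cover (Vg : set G) : open Vg -> K `<=` Vg ->
  exists R, (1 <= R)%N /\ Fix (ball R) `<=` Vg.
Proof.
move=> oV KV.
have hm : forall g, exists r, ~ Vg g -> exists v, ball r v /\ act g v <> v.
  move=> g; case: (pselect (Vg g)) => hg; first by exists 0%N.
  have [v hv] : exists v, act g v <> v.
    apply/not_existsP => hall; apply: hg; apply: KV => v.
    by case: (pselect (act g v = v)) => // h; case: (hall v h).
  have [r hr] := ball_conn (conn alpha v).
  by exists r => _; exists v.
have [m hmP] := choice hm.
pose f g := if pselect (Vg g) then Vg else [set mul g h | h in Fix (ball (m g))].
have fo : forall g, W g -> open (f g).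
  move=> g _; rewrite /f; destruct (pselect (Vg g)) => //.
  by apply: (ltrans_open GA mulC); exact: Fix_ball_open.
have cov : W `<=` cover W f.
  move=> x hx; exists x => //; rewrite /f; destruct (pselect (Vg x)) => //.
  by exists one; [exact: Fix1 | rewrite mul1r].
have [D' _ hD'] := compact_cover_np one W_compact fo cov.
have [R hR] : exists R, forall g, g \in (finmap.enum_fset D') -> (m g <= R)%N.
  elim: (finmap.enum_fset D') => [|x s [R hR]]; first by exists 0%N.
  exists (maxn (m x) R) => g; rewrite inE => /orP [/eqP ->|/hR h].
    exact: leq_maxl.
  exact: leq_trans h (leq_maxr _ _).
exists R.+1; split=> // x hx.
have xW : W x by apply: Fix_anti hx => v; apply: ball_mono.
have [g hg] := hD' x xW.
move: hg; rewrite /f; destruct (pselect (Vg g)) as [|hVg] => gD // -[h hh ehx].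
have [v [hv hgv]] := hmP g hVg.
apply: False_ind; apply: hgv.
have gE : g = mul x (inv h) by rewrite -ehx -mulA mulVr mul1r.
rewrite gE actM (FixV hh) //.
apply: hx; apply: ball_mono hv; apply: leqW; exact: hR.
Qed.

Local Notation pi := (quot_pi mul K).
Local Notation Q := (cosets mul K).
Let piE := qpiE GA act1 actM.
Let pi_repr := @qpi_repr G mul V act.
Let repr_pi := qrepr_pi GA act1 actM.
Let pi_mul := qpi_mul GA act1 actM.
Let pi_inv := qpi_inv GA act1 actM.

Lemma pi_cont : continuous pi.
Proof. by apply/continuousP => A; apply. Qed.

Lemma pi_pre (H : set G) : is_subgroup mul inv one H -> K `<=` H ->
  pi @^-1` (pi @` H) = H.
Proof.
case=> _ HM _ KH; apply/seteqP; split=> x /=; last by move=> hx; exists x.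
by case=> h hh /piE [k [hk ->]]; apply: HM => //; exact: KH.
Qed.

Lemma pi_sub (H : set G) : is_subgroup mul inv one H ->
  is_subgroup (@quot_mul G mul K) (@quot_inv G mul K inv) (quot_one mul K one) (pi @` H).
Proof.
case=> H1 HM HV; split.
- by exists one.
- by move=> _ _ [x hx <-] [y hy <-]; rewrite pi_mul; exists (mul x y) => //; exact: HM.
- by move=> _ [x hx <-]; rewrite pi_inv; exists (inv x) => //; exact: HV.
Qed.

Lemma U_cos : compact_open_subgroup (@quot_mul G mul K) (@quot_inv G mul K inv)
  (quot_one mul K one) (pi @` W).
Proof.
split.
- exact/pi_sub/Fix_sub.
- apply: continuous_compact; last exact: W_compact.
  exact/continuous_subspaceT/pi_cont.
- rewrite /open /= /quot_open pi_pre; [exact: Fix_ball_open | exact: Fix_sub | exact: K_Fix].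
Qed.

Lemma pull_back (VQ : set Q) (p : nat) :
  compact_open_subgroup (@quot_mul G mul K) (@quot_inv G mul K inv) (quot_one mul K one) VQ ->
  VQ `<=` pi @` W -> dvd_index (@quot_mul G mul K) (pi @` W) VQ p ->
  exists (Vg : set G) (R n : nat) (r : 'I_n -> G),
    [/\ is_subgroup mul inv one Vg, Vg `<=` W, Fix (ball R) `<=` Vg, (p %| n)%N &
        forall i, W (r i)] /\
        (forall g, W g -> exists i v, Vg v /\ g = mul (r i) v) /\
        (forall i j v v', Vg v -> Vg v' -> mul (r i) v = mul (r j) v' -> i = j).
Proof.
case=> [[VQ1 VQM VQV] _ oVQ] VW [n [f [fU funiq pn]]].
pose Vg := pi @^-1` VQ.
have Vsub : is_subgroup mul inv one Vg.
  split; first exact: VQ1.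
  - by move=> x y hx hy; rewrite /Vg /= -pi_mul; exact: VQM.
  - by move=> x hx; rewrite /Vg /= -pi_inv; exact: VQV.
have KV : K `<=` Vg.
  move=> k hk; rewrite /Vg /=.
  by have -> : pi k = pi one by apply/piE; exists (inv k); split; [exact: qKV | rewrite mulVr].
have [R [R1 hR]] := key_cover oVQ KV.
have piW : forall g, (pi @` W) (pi g) -> W g.
  by move=> g; rewrite -[W in _ -> W _](pi_pre (Fix_sub _) (@K_Fix (ball 1))).
exists Vg, R, n, (fun i => quot_repr (f i)); split; [split=> //|split].
- by move=> x /VW; exact: piW.
- by move=> i; apply: piW; rewrite pi_repr.
- move=> g hg.
  have [i [[vq [hvq e]] _]] := funiq (pi g) (ex_intro2 _ _ g hg erefl).
  have [k [hk ek]] : exists k, K k /\ g = mul (mul (quot_repr (f i)) (quot_repr vq)) k.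
    by apply/piE; rewrite -pi_mul !pi_repr.
  exists i, (mul (quot_repr vq) k); split.
    case: Vsub => _ VM _; apply: VM; [by rewrite /Vg /= pi_repr | exact: KV].
  by rewrite ek mulA.
- move=> i j v v' hv hv' e.
  have hu : (pi @` W) (pi (mul (quot_repr (f i)) v)).
    by exists (mul (quot_repr (f i)) v) => //; apply: FixM; apply: piW; [rewrite pi_repr; exact: fU | exact: VW].
  have [i0 [_ u0]] := funiq _ hu.
  rewrite -(u0 i); last by exists (pi v); split=> //; rewrite -pi_mul pi_repr.
  apply: u0; exists (pi v'); split=> //; rewrite e -pi_mul pi_repr //.
Qed.

Lemma W_ball R g v : W g -> ball R v -> ball R (act g v).
Proof.
move=> hg; apply: ball_act; first by apply: hg; left.
by move=> u w /(act_adj g).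
Qed.

Section Fin.
Context (R : nat) (s : seq (Veq V)) (hs : forall v, v \in s <-> ball R v).
Local Notation X := (seq_sub s).

Definition fX (g : G) (x : X) : X := insubd x (act g (val x) : Veq V).
Definition phi (g : G) : {perm X} :=
  match pselect (injective (fX g)) with left h => perm h | right _ => 1%g end.

Lemma fXE g x : W g -> val (fX g x) = act g (val x).
Proof.
move=> hg; rewrite /fX insubdK //; apply/hs; apply: W_ball => //.
by apply/hs; exact: (valP x).
Qed.

Lemma fX_inj g : W g -> injective (fX g).
Proof.
move=> hg x y e; apply: val_inj => /=.
have := congr1 val e; rewrite !fXE // => /(congr1 (act (inv g))).
by rewrite !actK.
Qed.

Lemma phiE g x : W g -> val (phi g x) = act g (val x).
Proof.
move=> hg; rewrite /phi; case: (pselect (injective (fX g))) => [h|/(_ (fX_inj hg))//].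
by rewrite permE fXE.
Qed.

Lemma phiM g h : W g -> W h -> (phi g * phi h)%g = phi (mul h g).
Proof.
move=> hg hh; apply/permP => x; apply: val_inj => /=.
by rewrite permM phiE // phiE // phiE ?actM //; apply: FixM.
Qed.

Lemma phi1 : phi one = 1%g.
Proof. by apply/permP => x; apply: val_inj => /=; rewrite perm1 phiE ?act1 //; exact: Fix1. Qed.

Lemma phi_ker g : W g -> phi g = 1%g -> Fix (ball R) g.
Proof.
move=> hg e v hv; have hv' : (v : Veq V) \in s by apply/hs.
have := phiE (SeqSub hv') hg; rewrite e perm1 /= => <- //.
Qed.

Lemma phiX g k x : W g -> val ((phi g ^+ k)%g x) = iter k (act g) (val x).
Proof.
move=> hg; rewrite permX; elim: k => //= k IH.
by rewrite phiE // -IH.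
Qed.

Lemma fin_step (Vg : set G) (n p : nat) (r : 'I_n -> G) :
  is_subgroup mul inv one Vg -> Vg `<=` W -> Fix (ball R) `<=` Vg -> prime p -> (p %| n)%N ->
  (forall i, W (r i)) ->
  (forall g, W g -> exists i v, Vg v /\ g = mul (r i) v) ->
  (forall i j v v', Vg v -> Vg v' -> mul (r i) v = mul (r j) v' -> i = j) ->
  exists g, [/\ W g, (exists v, ball R v /\ act g v <> v) &
                  forall v, ball R v -> iter p (act g) v = v].
Proof.
move=> [V1 VM VV] VW FV pp pn rW cos uni.
pose Wbar : {set {perm seq_sub s}} := ([set x | `[< exists g, W g /\ phi g = x >]])%SET.
pose Vbar : {set {perm seq_sub s}} := ([set x | `[< exists g, Vg g /\ phi g = x >]])%SET.
have wgs : group_set Wbar.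
  apply/group_setP; split.
    by rewrite /Wbar inE; apply/asboolP; exists one; split; [exact: Fix1 | exact: phi1].
  move=> x y; rewrite /Wbar !inE => -[g [hg <-]] [h [hh <-]].
  by exists (mul h g); split; [exact: FixM | rewrite phiM].
have vgs : group_set Vbar.
  apply/group_setP; split.
    by rewrite /Vbar inE; apply/asboolP; exists one; split; [exact: V1 | exact: phi1].
  move=> x y; rewrite /Vbar !inE => -[g [hg <-]] [h [hh <-]].
  by exists (mul h g); split; [exact: VM | rewrite phiM //; exact: VW].
pose WG := Group wgs; pose VG := Group vgs.
have VWG : VG \subset WG.
  rewrite /VG /WG /=; apply/fintype.subsetP => x; rewrite /Vbar /Wbar !inE => -[g [hg <-]]; exists g; split => //; exact: VW.
pose c (i : 'I_n) := (VG :* phi (r i))%g.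
have cinj : injective c.
  move=> i j e.
  have : phi (r i) \in (VG :* phi (r j))%g by rewrite -/(c j) -e; exact: rcoset_refl.
  case/rcosetP => x; rewrite inE => /asboolP [v [hv <-]] ev.
  have vW := VW _ hv.
  have yW : W (mul (r j) v) by exact: (FixM (rW j) vW).
  rewrite phiM // in ev.
  pose k := mul (inv (mul (r j) v)) (r i).
  have kW : W k by exact: (FixM (FixV yW) (rW i)).
  have k1 : phi k = 1%g.
    rewrite -phiM ?ev ?phiM ?mulV ?phi1 //; exact: FixV.
  have kV := FV _ (phi_ker kW k1).
  apply: (uni i j one (mul v k) V1 (VM _ _ hv kV)).
  by rewrite mul1r mulA /k mulKVl.
have card_idx : #|WG : VG|%g = n.
  rewrite -[n]card_ord -(card_imset _ cinj); apply: eq_card => C.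
  apply/rcosetsP/imsetP.
    case=> x; rewrite inE => /asboolP [g [hg <-]] ->.
    have [i [v [hv ->]]] := cos g hg; exists i => //.
    rewrite /c -phiM //; last exact: VW.
    rewrite rcosetM rcoset_id //; rewrite inE; apply/asboolP; exists v; split=> //.
  case=> i _ ->; exists (phi (r i)) => //.
  by rewrite inE; apply/asboolP; exists (r i).
have pW : (p %| #|WG|)%N.
  by rewrite -(Lagrange VWG) card_idx dvdn_mull.
have [x xW ox] := pgroup.Cauchy pp pW.
move: xW; rewrite inE => /asboolP [g [hg ex]].
exists g; split=> //.
  have x1 : x != 1%g by rewrite -order_eq1 ox; case: p pp {pn pW ox} => [|[]].
  have [y hy] : exists y, x y != y.
    apply/not_existsP => hall; move/eqP: x1; apply; apply/permP => y.
    by rewrite perm1; apply/eqP; have := hall y => /negP /negbNE.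
  exists (val y); split; first by apply/hs; exact: valP.
  by move=> e; move/eqP: hy; apply; apply: val_inj; rewrite -ex phiE.
move=> v hv; have hv' : (v : Veq V) \in s by apply/hs.
have := phiX p (SeqSub hv') hg; rewrite ex -ox expg_order perm1 /=.
by move=> <-.
Qed.

End Fin.

Section Graph.
Context (b : 'I_d -> V) (binj : injective b) (brange : range b = adj alpha).

Lemma L_mem (x : 'S_d) : (x \in local_action act alpha b) <->
  exists g, act g alpha = alpha /\ forall i, act g (b i) = b (x i).
Proof. by rewrite /local_action inE; split => /asboolP. Qed.
Lemma L_mem1 (x : 'S_d) : (x \in local_action act alpha b) ->
  exists g, act g alpha = alpha /\ forall i, act g (b i) = b (x i).
Proof. exact: (proj1 (L_mem x)). Qed.
Lemma L_mem2 (x : 'S_d) : 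
  (exists g, act g alpha = alpha /\ forall i, act g (b i) = b (x i)) ->
  (x \in local_action act alpha b).
Proof. exact: (proj2 (L_mem x)). Qed.

Lemma stab_group i : group_set (perm_point_stab (local_action act alpha b) i).
Proof.
apply/group_setP; split.
  rewrite inE perm1 eqxx andbT; apply: L_mem2; exists one; split=> // j.
  by rewrite act1 perm1.
move=> x y; rewrite !inE => /andP [/asboolP [g1 [h1 e1]] /eqP f1] /andP [/asboolP [g2 [h2 e2]] /eqP f2].
rewrite permM f1 f2 eqxx andbT; apply/asboolP; exists (mul g2 g1); split.
  by rewrite actM h1 h2.
by move=> j; rewrite actM e1 e2 permM.
Qed.

Lemma nbr_alpha i : adj alpha (b i). Proof. by rewrite -brange; exists i. Qed.
Lemma nbr_alphaP x : adj alpha x -> exists j, b j = x.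
Proof. by rewrite -brange => -[j _ <-]; exists j. Qed.

Lemma graph_step R g p : prime p -> W g -> (exists v, ball R v /\ act g v <> v) ->
  (forall v, ball R v -> iter p (act g) v = v) ->
  exists i, (p %| #|perm_point_stab (local_action act alpha b) i|)%N.
Proof.
move=> pp hg exR hiter.
pose P r := `[< exists v, ball r v /\ act g v <> v >].
have exP : exists r, P r by exists R; apply/asboolP.
case: (ex_minnP exP) => m /asboolP [v [hv hgv]] mmin.
have mR : (m <= R)%N by apply: mmin; apply/asboolP.
have fixm : forall r z, (r < m)%N -> ball r z -> act g z = z.
  move=> r z rm hz; case: (pselect (act g z = z)) => // hz'.
  have := mmin r; rewrite (_ : P r = true); last by apply/asboolP; exists z.
  by move=> /(_ isT); rewrite leqNgt rm.
case: m mmin mR fixm hv hgv => [|[|m2]] mmin mR fixm hv hgv.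
- by apply: False_ind; apply: hgv; apply: hg; apply: ball_mono hv.
- by apply: False_ind; apply: hgv; apply: hg.
case: hv => [hv|[u [hu huv]]]; first by case: hgv; exact: (fixm m2.+1).
case: hu => [hu|[u' [hu' hu'u]]].
  by case: hgv; apply: (fixm m2.+1) => //; right; exists u.
have gu : act g u = u by apply: (fixm m2.+1) => //; right; exists u'.
have gu' : act g u' = u' by apply: (fixm m2.+1) => //; left.
have [h ha] := trans u alpha.
pose g' := mul h (mul g (inv h)).
have g'E : forall z, act g' z = act h (act g (act (inv h) z)) by move=> z; rewrite !actM.
have hia : act (inv h) alpha = u by rewrite -ha actK.
have g'a : act g' alpha = alpha by rewrite g'E hia gu.
have ht : forall i, exists j, b j = act g' (b i).
  move=> i; apply: nbr_alphaP; rewrite -{1}g'a; apply: (proj1 (act_adj _ _ _)); exact: nbr_alpha.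
have [t tE] := choice ht.
have tinj : injective t.
  move=> i j e; apply: binj; have := congr1 b e; rewrite !tE => /(congr1 (act (inv g'))).
  by rewrite !actK.
pose tau := perm tinj.
have btau : forall i, b (tau i) = act g' (b i) by move=> i; rewrite permE tE.
have [i0 e0] : exists i0, b i0 = act h u'.
  apply: nbr_alphaP; rewrite -ha; apply: (proj1 (act_adj _ _ _)); exact: adj_sym.
exists i0.
have tauS : tau \in perm_point_stab (local_action act alpha b) i0.
  rewrite inE; apply/andP; split.
    by apply: L_mem2; exists g'; split=> // i; rewrite btau.
  apply/eqP; apply: binj; rewrite btau e0 g'E actK gu' //.
have tau1 : tau != 1%g.
  apply/eqP => e.
  have [j ej] : exists j, b j = act h v by apply: nbr_alphaP; rewrite -ha; apply: (proj1 (act_adj _ _ _)).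
  apply: hgv; have := btau j; rewrite e perm1 ej g'E actK => /(congr1 (act (inv h))).
  by rewrite !actK.
have iterE : forall k i, b (iter k tau i) = act h (iter k (act g) (act (inv h) (b i))).
  elim=> [|k IH] i /=; first by rewrite actKV.
  by rewrite btau IH g'E actK.
have taup : (tau ^+ p)%g = 1%g.
  apply/permP => i; rewrite permX perm1; apply: binj; rewrite iterE hiter ?actKV //.
  apply: (ball_mono mR); right; exists u; split; first by right; exists u'.
  rewrite -hia; apply: (proj1 (act_adj _ _ _)); exact: nbr_alpha.
have otau : #[tau]%g = p.
  have : (#[tau]%g %| p)%N by rewrite cyclic.order_dvdn taup.
  case/primeP: pp => _ hd /hd /orP [/eqP o1|/eqP //].
  by move: tau1; rewrite -order_eq1 o1.
rewrite -otau; exact: (@cyclic.order_dvdG _ (Group (stab_group i0)) tau tauS).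
Qed.

End Graph.

End Main.

Unset Implicit Arguments.
Set Strict Implicit.
Set Printing Implicit Defensive.


Theorem mainTheorem18 (G : topologicalType) (mul : G -> G -> G) (inv : G -> G)
  (one : G) (V : Type) (adj : V -> V -> Prop) (act : G -> V -> V) (d : nat) :
  tdlc_group mul inv one ->
  compactly_generated mul inv one ->
  ~ compact [set: G] ->
  cayley_abels_graph mul one adj act d ->
  let K := action_kernel act in
  (forall (alpha : V) (b : 'I_d -> V), injective b -> range b = adj alpha ->
     forall p : nat,
       local_prime_content (@quot_mul G mul K)
         (@quot_inv G mul K inv) (quot_one mul K one) p ->
       exists i : 'I_d,
         (p %| #|perm_point_stab (local_action act alpha b) i|)%N)
  /\ finite_set (local_prime_content (@quot_mul G mul K)
                   (@quot_inv G mul K inv) (quot_one mul K one)).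
Proof.
move=> [GA [mulC _] _ _ _] _ _ [[adj_sym _] [[v0] conn] nbhd [act1 actM act_adj] [trans stabCO]] K.
have [nbr nbrP] := choice nbhd.
have nbrR : forall u, range (nbr u) = adj u by move=> u; case: (nbrP u).
have part1 : forall (alpha : V) (b : 'I_d -> V), injective b -> range b = adj alpha ->
     forall p : nat,
       local_prime_content (@quot_mul G mul K)
         (@quot_inv G mul K inv) (quot_one mul K one) p ->
       exists i : 'I_d,
         (p %| #|perm_point_stab (local_action act alpha b) i|)%N.
  move=> alpha b binj brange p [pp hL].
  have [VQ [cVQ sub dvd]] := hL _ (U_cos GA mulC act1 actM stabCO nbrR alpha).
  have [Vg [R [n [r [[Vs VW FV pn rW] [cos uni]]]]]] :=
    pull_back GA mulC act1 actM stabCO conn nbrR cVQ sub dvd.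
  have [s hs] := ball_enum alpha nbrR R.
  have [g [gW moved hit]] := fin_step GA act1 actM act_adj hs Vs VW FV pp pn rW cos uni.
  exact: (graph_step GA adj_sym act1 actM act_adj trans binj brange pp gW moved hit).
split=> //.
have [b [binj brange]] := nbhd v0.
pose M := (\sum_(i < d) #|perm_point_stab (local_action act v0 b) i|)%N.
apply: (@sub_finite_set _ _ `I_M.+1); last exact: finite_II.
move=> p hp; have [i hi] := part1 v0 b binj brange p hp.
rewrite /= ltnS; apply: leq_trans (dvdn_leq _ hi) _.
  by apply/card_gt0P; exists 1%g; rewrite inE perm1 eqxx andbT /local_action inE; apply/asboolP; exists one; split=> // j; rewrite act1 perm1.
by rewrite /M (bigD1 i) //= leq_addr.
Qed.
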